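(* Let $\mathbb{H}\in\{\mathbb{R},\mathbb{C}\}$ and let $A\in\mathbb{H}^{m\times d}$ have the phase retrieval property. Then the set $\mathcal{K}_A=\{|Ax|:x\in\mathbb{H}^d\}\subset\mathbb{R}^m$ is not convex.
   Context: $|Ax|$ is the vector of entrywise moduli. $A$ has the phase retrieval property if for all $x,y\in\mathbb{H}^d$, $|Ax|=|Ay|$ implies $x=cy$ for some $c\in\mathbb{H}$ with $|c|=1$. *)

(* Defs.v *)
From HB Require Import structures.
From mathcomp Require Import all_boot all_order all_algebra.
From mathcomp Require Import all_classical all_reals topology convex.
From mathcomp Require Import complex.
Set Implicit Arguments. Unset Strict Implicit. Unset Printing Implicit Defensive.
Import Order.TTheory GRing.Theory Num.Theory.
Local Open Scope ring_scope.
Local Open Scope classical_set_scope.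

Definition cmod (R : realType) (z : R[i]) : R := ComplexField.Normc.normc z.

Definition absAx_R (R : realType) (m d : nat) (A : 'M[R]_(m, d)) (x : 'cV[R]_d)
  : 'cV[R]_m := map_mx (fun z => `|z|) (A *m x).
Definition absAx_C (R : realType) (m d : nat) (A : 'M[R[i]]_(m, d))
  (x : 'cV[R[i]]_d) : 'cV[R]_m := map_mx (@cmod R) (A *m x).

Definition phase_retrieval_R (R : realType) (m d : nat) (A : 'M[R]_(m, d)) :=
  forall x y : 'cV[R]_d, absAx_R A x = absAx_R A y ->
    exists c : R, `|c| = 1 /\ x = c *: y.
Definition phase_retrieval_C (R : realType) (m d : nat) (A : 'M[R[i]]_(m, d)) :=
  forall x y : 'cV[R[i]]_d, absAx_C A x = absAx_C A y ->
    exists c : R[i], cmod c = 1 /\ x = c *: y.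

Definition KA_R (R : realType) (m d : nat) (A : 'M[R]_(m, d))
  : set (convex_lmodType 'cV[R]_m) := [set absAx_R A x | x in setT].
Definition KA_C (R : realType) (m d : nat) (A : 'M[R[i]]_(m, d))
  : set (convex_lmodType 'cV[R]_m) := [set absAx_C A x | x in setT].

(* Main.v *)
Require Import Defs.
From HB Require Import structures.
From mathcomp Require Import all_boot all_order all_algebra.
From mathcomp Require Import all_classical all_reals topology convex.
From mathcomp Require Import complex interval_inference.
From mathcomp Require Import ring lra.
Set Implicit Arguments. Unset Strict Implicit. Unset Printing Implicit Defensive.
Import Order.TTheory GRing.Theory Num.Theory.
Local Open Scope ring_scope.

Definition ev (F : fieldType) m d (A : 'M[F]_(m,d)) (x : 'cV[F]_d) (k : 'I_m) : F :=
  (A *m x) k 0.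

Lemma evL (F : fieldType) m d (A : 'M[F]_(m,d)) a b x y k :
  ev A (a *: x + b *: y) k = a * ev A x k + b * ev A y k.
Proof. by rewrite /ev mulmxDr -!scalemxAr !mxE. Qed.

Lemma evB (F : fieldType) m d (A : 'M[F]_(m,d)) a b x y k :
  ev A (a *: x - b *: y) k = a * ev A x k - b * ev A y k.
Proof. by rewrite /ev mulmxBr -!scalemxAr !mxE. Qed.

Lemma evD' (F : fieldType) m d (A : 'M[F]_(m,d)) x y k :
  ev A (x + y) k = ev A x k + ev A y k.
Proof. by rewrite /ev mulmxDr !mxE. Qed.

Lemma evB' (F : fieldType) m d (A : 'M[F]_(m,d)) x y k :
  ev A (x - y) k = ev A x k - ev A y k.
Proof. by rewrite /ev mulmxBr !mxE. Qed.

Definition Zs (F : fieldType) m d (A : 'M[F]_(m,d)) x y : {set 'I_m} :=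
  [set k | (ev A x k == 0) && (ev A y k == 0)].
Definition Dt (F : fieldType) m d (A : 'M[F]_(m,d)) x y i j :=
  ev A x i * ev A y j - ev A y i * ev A x j.
Definition injm (F : fieldType) m d (A : 'M[F]_(m,d)) :=
  forall x : 'cV[F]_d, A *m x = 0 -> x = 0.
Definition spanP (F : fieldType) m d (A : 'M[F]_(m,d)) x y :=
  forall w, (forall k, ev A x k = 0 -> ev A y k = 0 -> ev A w k = 0) ->
    exists a b, w = a *: x + b *: y.

Lemma nz_entry (F : fieldType) m (M : 'cV[F]_m) : M != 0 -> exists k, M k 0 != 0.
Proof.
move=> H; case: (pickP (fun k => M k 0 != 0)) => [k Hk|H0]; first by exists k.
case/eqP: H; apply/matrixP => k l; rewrite ord1 mxE.
by have /negbFE/eqP := H0 k.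
Qed.

Lemma nz_ev (F : fieldType) m d (A : 'M[F]_(m,d)) x : injm A -> x != 0 ->
  exists k, ev A x k != 0.
Proof.
move=> injA x0; apply: nz_entry; apply/eqP => /injA; exact/eqP.
Qed.

Lemma step (F : fieldType) m d (A : 'M[F]_(m,d)) x y i j : injm A ->
  Dt A x y i j != 0 -> ~ spanP A x y ->
  exists x' y' i' j', Dt A x' y' i' j' != 0 /\ Zs A x y \proper Zs A x' y'.
Proof.
move=> injA D0 /existsNP [w /not_implyP [Hw Hnot]].
rewrite /Dt in D0.
pose a := (ev A w i * ev A y j - ev A y i * ev A w j) /
   (ev A x i * ev A y j - ev A y i * ev A x j).
pose b := (ev A x i * ev A w j - ev A w i * ev A x j) /
   (ev A x i * ev A y j - ev A y i * ev A x j).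
pose w' := w - (a *: x + b *: y).
have ew k : ev A w' k = ev A w k - (a * ev A x k + b * ev A y k).
  by rewrite /w' evB' evL.
have wi : ev A w' i = 0 by rewrite ew /a /b; field.
have wj : ev A w' j = 0 by rewrite ew /a /b; field.
have w'0 : w' != 0.
  apply/eqP => H; apply: Hnot; exists a, b.
  by move/eqP: H; rewrite /w' subr_eq0 => /eqP.
have [k Hk] := nz_ev injA w'0.
pose q := ev A y i *: x - ev A x i *: y.
have eq k' : ev A q k' = ev A y i * ev A x k' - ev A x i * ev A y k'.
  by rewrite /q evB.
exists w', q, j, k; split.
  rewrite /Dt wj mul0r sub0r oppr_eq0 mulf_neq0 // eq.
  apply: contra D0 => /eqP H.
  by rewrite -oppr_eq0; apply/eqP; rewrite -H; ring.
apply/properP; split.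
  apply/fintype.subsetP => l; rewrite !inE => /andP[/eqP xl /eqP yl].
  by rewrite ew eq xl yl (Hw l xl yl) !mulr0 subrr addr0 subrr eqxx.
exists i.
  by rewrite inE wi eq eqxx /=; apply/eqP; ring.
rewrite inE; apply/negP => /andP[/eqP xi /eqP yi].
by move: D0; rewrite xi yi !mul0r subrr eqxx.
Qed.

Lemma face (F : fieldType) m d (A : 'M[F]_(m,d)) : (2 <= d)%N -> injm A ->
  exists x y i j, Dt A x y i j != 0 /\ spanP A x y.
Proof.
move=> d2 injA; apply: contrapT => H.
have H' : forall x y i j, Dt A x y i j != 0 -> ~ spanP A x y.
  by move=> x y i j D0 sp; apply: H; exists x, y, i, j.
suff : forall n, exists x y i j, Dt A x y i j != 0 /\ (n <= #|Zs A x y|)%N.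
  case/(_ m.+1) => x [y [i [j [_]]]].
  by move=> H1; have := leq_trans H1 (max_card _); rewrite card_ord ltnn.
elim=> [|n [x [y [i [j [D0 Hn]]]]]]; last first.
  have [x' [y' [i' [j' [D0' Hp]]]]] := step injA D0 (H' _ _ _ _ D0).
  exists x', y', i', j'; split => //.
  exact: leq_ltn_trans Hn (proper_card Hp).
have d0 : (0 < d)%N by apply: leq_trans d2.
pose i0 : 'I_d := Ordinal d0.
pose i1 : 'I_d := Ordinal d2.
pose x : 'cV[F]_d := delta_mx i0 0.
pose y : 'cV[F]_d := delta_mx i1 0.
have x0 : x != 0.
  apply/eqP => /matrixP /(_ i0 0); rewrite !mxE !eqxx /= => /eqP; by rewrite oner_eq0.
have [i Hi] := nz_ev injA x0.
pose z := ev A y i *: x - ev A x i *: y.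
have z0 : z != 0.
  apply/eqP => /matrixP /(_ i1 0); rewrite !mxE !eqxx /=.
  rewrite mulr0 mulr1 sub0r => /eqP; rewrite oppr_eq0 => H0.
  by move: Hi; rewrite H0.
have [j Hj] := nz_ev injA z0.
exists x, y, j, i; split => //.
move: Hj; rewrite /z evB /Dt.
by have -> : ev A y i * ev A x j - ev A x i * ev A y j =
  ev A x j * ev A y i - ev A y j * ev A x i by ring.
Qed.

Local Open Scope classical_set_scope.
Local Open Scope convex_scope.

Lemma half_ge0 (R : realType) : (0:R) <= 2^-1.
Proof. by rewrite invr_ge0. Qed.
Lemma half_le1 (R : realType) : (2:R)^-1 <= 1.
Proof. by rewrite invf_le1 // ler1n. Qed.
Definition half01 (R : realType) : {i01 R} := Itv01 (half_ge0 R) (half_le1 R).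

Lemma half01E (R : realType) : (half01 R)%:num = 2^-1.
Proof. reflexivity. Qed.

Lemma convE (R : realType) m (a b : convex_lmodType 'cV[R]_m) (l : {i01 R}) :
  a <| l |> b = (l%:num) *: (a : 'cV[R]_m) + (1 - l%:num) *: b.
Proof. reflexivity. Qed.

Lemma memKR (R : realType) m d (A : 'M[R]_(m,d)) v :
  v \in KA_R A <-> exists x, absAx_R A x = v.
Proof. rewrite inE /KA_R /=; split; [case=> x _ <-; by exists x| case=> x <-; by exists x]. Qed.

Lemma memKC (R : realType) m d (A : 'M[R[i]]_(m,d)) v :
  v \in KA_C A <-> exists x, absAx_C A x = v.
Proof. rewrite inE /KA_C /=; split; [case=> x _ <-; by exists x| case=> x <-; by exists x]. Qed.

Lemma real_aux (R : realType) (a b p q : R) : `|a| = 1 -> `|b| = 1 ->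
  `|a * p + b * q| = 2^-1 * `|p + q| + (1 - 2^-1) * `|p - q| ->
  `|p + q| = `|p - q|.
Proof.
have e1 : `|- p + q| = `|p - q| by rewrite addrC -opprB normrN.
have e2 : `|- p - q| = `|p + q| by rewrite -opprD normrN.
move=> /eqP Ha /eqP Hb; move: Ha Hb.
rewrite !eqr_norml => /andP[/orP[/eqP-> | /eqP->] _] /andP[/orP[/eqP-> | /eqP->] _];
  rewrite ?mul1r ?mulN1r ?e1 ?e2 => H.
all: lra.
Qed.

Lemma real_part (R : realType) m d (A : 'M[R]_(m, d)) :
  (2 <= d)%N -> phase_retrieval_R A -> ~ convex_set (KA_R A).
Proof.
move=> d2 PR cvx.
have injA : injm A.
  move=> x Ax0; have := PR x 0; rewrite /absAx_R Ax0 mulmx0 => /(_ erefl) [c [_ ->]].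
  by rewrite scaler0.
have [x [y [i [j [D0 sp]]]]] := face d2 injA.
rewrite /Dt in D0.
pose r := ev A y i *: x - ev A x i *: y.
pose s := ev A y j *: x - ev A x j *: y.
have er k : ev A r k = ev A y i * ev A x k - ev A x i * ev A y k by rewrite /r evB.
have es k : ev A s k = ev A y j * ev A x k - ev A x j * ev A y k by rewrite /s evB.
have := cvx (absAx_R A (r + s)) (absAx_R A (r - s)) (half01 R).
rewrite !memKR => /(_ (ex_intro _ _ erefl) (ex_intro _ _ erefl)) [w Hw].
have ew k : `|ev A w k| = 2^-1 * `|ev A r k + ev A s k| + (1 - 2^-1) * `|ev A r k - ev A s k|.
  have := congr1 (fun M : 'cV[R]_m => M k 0) Hw.
  by rewrite convE half01E /= -evD' -evB' /ev !mxE.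
have [a [b wE]] : exists a b, w = a *: x + b *: y.
  apply: sp => k xk yk; apply/eqP; rewrite -normr_eq0 ew er es xk yk.
  by rewrite !mulr0 subrr !addr0 subrr normr0 !mulr0 addr0.
pose al := - ev A w j / (ev A x i * ev A y j - ev A y i * ev A x j).
pose be := ev A w i / (ev A x i * ev A y j - ev A y i * ev A x j).
have wk k : ev A w k = al * ev A r k + be * ev A s k.
  by rewrite /al /be wE !evL er es; field.
have ri : ev A r i = 0 by rewrite er; ring.
have sj : ev A s j = 0 by rewrite es; ring.
have si : ev A s i = ev A x i * ev A y j - ev A y i * ev A x j by rewrite es; ring.
have rj : ev A r j = - (ev A x i * ev A y j - ev A y i * ev A x j) by rewrite er; ring.
have nD : `|ev A x i * ev A y j - ev A y i * ev A x j| != 0 by rewrite normr_eq0.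
have Hbe : `|be| = 1.
  have := ew i; rewrite wk ri si mulr0 add0r sub0r normrN normrM.
  move=> H; apply: (mulIf nD); rewrite mul1r H; rewrite ?add0r; lra.
have Hal : `|al| = 1.
  have := ew j; rewrite wk rj sj mulr0 !addr0 subr0 normrM normrN.
  move=> H; apply: (mulIf nD); rewrite mul1r H; rewrite ?addr0 ?subr0 ?normrN; lra.
have eqrs k : `|ev A r k + ev A s k| = `|ev A r k - ev A s k|.
  by apply: (real_aux Hal Hbe); rewrite -wk ew.
have [c [_ rsE]] : exists c : R, `|c| = 1 /\ r + s = c *: (r - s).
  apply: PR; apply/matrixP => k l; rewrite ord1 !mxE.
  have := eqrs k; rewrite -evD' -evB' /ev /absAx_R. by rewrite !mxE.
have Hk k : ev A r k + ev A s k = c * (ev A r k - ev A s k).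
  by rewrite -evD' -evB' rsE /ev -scalemxAr mxE.
have c1 : c = -1.
  have := Hk i; rewrite ri si add0r sub0r mulrN => H.
  have : (1 + c) * (ev A x i * ev A y j - ev A y i * ev A x j) = 0.
    by rewrite mulrDl mul1r {1}H addNr.
  move/eqP; rewrite mulf_eq0 (negPf D0) orbF addrC addr_eq0 => /eqP //.
have := Hk j; rewrite sj addr0 subr0 c1 mulN1r => /eqP.
rewrite -subr_eq0 opprK -mulr2n mulrn_eq0 /= rj oppr_eq0 => /eqP H.
by move: D0; rewrite H eqxx.
Qed.

Lemma cm (R : realType) (z : R[i]) : ((cmod z)%:C)%C = `|z|.
Proof. by case: z => a b; rewrite normc_def. Qed.

Lemma cinj (R : realType) (a b : R) : (a%:C)%C = (b%:C)%C -> a = b.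
Proof. by case. Qed.

Lemma cmod2 (R : realType) (z : R[i]) : cmod (z + z) = cmod z + cmod z.
Proof. by apply: cinj; rewrite rmorphD !cm -mulr2n normrMn mulr2n. Qed.

Lemma absC_E (R : realType) m d (A : 'M[R[i]]_(m,d)) x k :
  (absAx_C A x) k 0 = cmod (ev A x k).
Proof. by rewrite /absAx_C /ev mxE. Qed.

Lemma convEntry (R : realType) m (M N : 'cV[R]_m) (l l' : R) k :
  (l *: M + l' *: N) k 0 = l * M k 0 + l' * N k 0.
Proof. by rewrite !mxE. Qed.

Lemma conjrect (C : numClosedFieldType) (X Y : C) :
  X \is Num.real -> Y \is Num.real -> `|X + 'i * Y| = `|X - 'i * Y|.
Proof.
move=> rX rY; have rNY : - Y \is Num.real by rewrite rpredN.
rewrite -mulrN (normC_rect rX rY) (normC_rect rX rNY).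
by rewrite sqrrN.
Qed.

Lemma caux (C : numClosedFieldType) (a b p q : C) : `|a| = 1 -> `|b| = 1 ->
  `|a * p + b * q| = `|p| + `|q| ->
  `|a * p + ('i * b) * q| = `|a * p - ('i * b) * q|.
Proof.
move=> Ha Hb H.
have H2 : `|a * p + b * q| = `|a * p| + `|b * q| by rewrite !normrM Ha Hb !mul1r.
case: (normCDeq H2) => t _ [e1 e2].
rewrite -!mulrA e2 e1 !mulrA -mulrDl -mulrBl.
by rewrite [LHS]normrM [RHS]normrM conjrect.
Qed.

Lemma complex_part (R : realType) m d (A : 'M[R[i]]_(m, d)) :
  (2 <= d)%N -> phase_retrieval_C A -> ~ convex_set (KA_C A).
Proof.
move=> d2 PR cvx.
have injA : injm A.
  move=> x Ax0; have := PR x 0; rewrite /absAx_C Ax0 mulmx0 => /(_ erefl) [c [_ ->]].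
  by rewrite scaler0.
have [x [y [i [j [D0 sp]]]]] := face d2 injA.
rewrite /Dt in D0.
pose r := ev A y i *: x - ev A x i *: y.
pose s := ev A y j *: x - ev A x j *: y.
have er k : ev A r k = ev A y i * ev A x k - ev A x i * ev A y k by rewrite /r evB.
have es k : ev A s k = ev A y j * ev A x k - ev A x j * ev A y k by rewrite /s evB.
clearbody r s.
have m1 : absAx_C A (r + r) \in KA_C A by apply/memKC; exists (r + r).
have m2 : absAx_C A (s + s) \in KA_C A by apply/memKC; exists (s + s).
have /memKC [w Hw] := cvx _ _ (half01 R) m1 m2.
have ew k : cmod (ev A w k) = cmod (ev A r k) + cmod (ev A s k).
  have := congr1 (fun M : 'cV[R]_m => M k 0) Hw.
  rewrite convE half01E /= convEntry.
  rewrite !absC_E.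
  rewrite !evD'.
  rewrite !cmod2 => ->; lra.
have ewC k : `|ev A w k| = `|ev A r k| + `|ev A s k|.
  by rewrite -!cm ew rmorphD.
have [a [b wE]] : exists a b, w = a *: x + b *: y.
  apply: sp => k xk yk; apply/eqP; rewrite -normr_eq0 ewC er es xk yk.
  by rewrite !mulr0 subrr normr0 addr0.
pose al := - ev A w j / (ev A x i * ev A y j - ev A y i * ev A x j).
pose be := ev A w i / (ev A x i * ev A y j - ev A y i * ev A x j).
have wk k : ev A w k = al * ev A r k + be * ev A s k.
  by rewrite /al /be wE !evL er es; field.
have ri : ev A r i = 0 by rewrite er; ring.
have sj : ev A s j = 0 by rewrite es; ring.
have si : ev A s i = ev A x i * ev A y j - ev A y i * ev A x j by rewrite es; ring.
have rj : ev A r j = - (ev A x i * ev A y j - ev A y i * ev A x j) by rewrite er; ring.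
have nD : `|ev A x i * ev A y j - ev A y i * ev A x j| != 0 by rewrite normr_eq0.
have Hbe : `|be| = 1.
  have := ewC i; rewrite wk ri si mulr0 add0r normr0 add0r normrM.
  by move=> H; apply: (mulIf nD); rewrite mul1r H.
have Hal : `|al| = 1.
  have := ewC j; rewrite wk rj sj mulr0 addr0 normr0 addr0 normrM normrN.
  by move=> H; apply: (mulIf nD); rewrite mul1r H.
pose u := al *: r + ('i * be) *: s.
pose v := al *: r - ('i * be) *: s.
have [c [_ uE]] : exists c : R[i], cmod c = 1 /\ u = c *: v.
  apply: PR; apply/matrixP => k l; rewrite ord1 !absC_E; apply: cinj.
  rewrite !cm /u /v evL evB.
  have hh : `|al * ev A r k + be * ev A s k| = `|ev A r k| + `|ev A s k| by rewrite -wk ewC.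
  exact: (caux Hal Hbe hh).
have Hk k : ev A u k = c * ev A v k.
  by rewrite uE /ev -scalemxAr mxE.
have be0 : be != 0 by rewrite -normr_eq0 Hbe oner_eq0.
have al0 : al != 0 by rewrite -normr_eq0 Hal oner_eq0.
have c1 : c = -1.
  have := Hk i; rewrite /u /v evL evB ri si mulr0 add0r sub0r mulrN => H.
  have : (1 + c) * ('i * be * (ev A x i * ev A y j - ev A y i * ev A x j)) = 0.
    by rewrite mulrDl mul1r {1}H addNr.
  have nz : 'i * be * (ev A x i * ev A y j - ev A y i * ev A x j) != 0.
    by apply: mulf_neq0 => //; apply: mulf_neq0 => //; exact: neq0Ci.
  move/eqP; rewrite mulf_eq0 (negPf nz) orbF addrC addr_eq0 => /eqP //.
have := Hk j; rewrite /u /v evL evB sj mulr0 addr0 subr0 c1 mulN1r => /eqP.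
rewrite -subr_eq0 opprK -mulr2n mulrn_eq0 /= rj mulrN oppr_eq0 mulf_eq0 (negPf al0) /=.
by rewrite (negPf D0).
Qed.

Theorem lemma3p2 (R : realType) :
  (forall (m d : nat) (A : 'M[R]_(m, d)),
      (2 <= d)%N -> phase_retrieval_R A -> ~ convex_set (KA_R A)) /\
  (forall (m d : nat) (A : 'M[R[i]]_(m, d)),
      (2 <= d)%N -> phase_retrieval_C A -> ~ convex_set (KA_C A)).
Proof.
split => m d A; [exact: real_part | exact: complex_part].
Qed.
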